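(* Let $c\ge2$ and let $F$ be a standard $c$-coloring with associated partially looped coloring $E_F$. Then for every color $i\in[c]$: every embedding of $K^i_{\max(c+1,6)}$ into $E_F$ maps all vertices to a single vertex of $E_F$; and every embedding of $K_3^i$ into $E_F$ whose image contains a vertex of $\mathcal X_F$ maps all three vertices to a single vertex.
   Context: A $c$-coloring $F$ is a map from the $2$-subsets of a finite set $V(F)$ to $[c]$. $F$ is standard if it contains no induced copy of any coloring in $\hat K_{3,1}$ or $\hat K_{3,3}$, where: $\hat K_{3,1}$ is the family of $4$-vertex colorings consisting of a monochromatic triangle of color $a$ plus a vertex joined to it by either (two edges of color $a$ and one of color $b\ne a$), or (three edges of three distinct colors, one being $a$), or (two edges of color $b$ and one of color $d$, with $a,b,d$ distinct); $\hat K_{3,3}$ is the family of $6$-vertex colorings consisting of two disjoint triangles monochromatic in colors $a,b$ with all nine edges between them of color $d$, $a,b,d$ distinct. $\mathcal X_F$ is the set of inclusion-maximal vertex sets of size at least $\max(c+1,6)$ all of whose pairs have one color; $Y_F=\{\{y\}: y\in V(F)\setminus\bigcup_{X\in\mathcal X_F}X\}$. (For standard $F$, for each $X\in\mathcal X_F$ and $y$ outside $X$ all but at most one edge of $y\ast X$ have a common color, and between distinct $X_1,X_2\in\mathcal X_F$ all but a matching or a star-free remainder of $X_1\ast X_2$ have a common color; so the majority color below is well defined.) $E_F$ is the coloring on vertex set $\mathcal X_F\sqcup Y_F$ of pairs $\{v_1,v_2\}$ given by: no loop at elements of $Y_F$; $E_F(\{\{y_1\},\{y_2\}\})=F(\{y_1,y_2\})$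 for distinct elements of $Y_F$; the loop at $X\in\mathcal X_F$ gets the color of $F[X]$; every other pair $\{v_1,v_2\}$ gets the majority color among the edges of $v_1\ast v_2$ in $F$. A map $\varphi:[t]\to V(E_F)$ embeds $K_t^i$ (all edges color $i$) if $E_F(\{\varphi(u),\varphi(w)\})$ is defined and equals $i$ for all distinct $u,w\in[t]$ (in particular two vertices may share an image only if that image has a loop of color $i$). *)

(* Defs.v *)
From mathcomp Require Import all_boot.
Set Implicit Arguments. Unset Strict Implicit. Unset Printing Implicit Defensive.

(* A c-coloring of the 2-subsets of a finite vertex type T: F : {set T} -> 'I_c.
   Only the values of F on 2-element sets [set x; y] (x != y) are meaningful.
   Colors [c] = {1..c} are represented by 'I_c. *)

Section Coloring.
Variables (T : finType) (c : nat) (F : {set T} -> 'I_c).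

Definition col (x y : T) : 'I_c := F [set x; y].

(* Pattern of the three edges from the extra vertex in \hat K_{3,1},
   where a is the triangle color and p q r the colors of w-x, w-y, w-z. *)
Definition K31_pattern (a p q r : 'I_c) : bool :=
  [|| [&& p == a, q == a & r != a], [&& p == a, r == a & q != a]
    | [&& q == a, r == a & p != a]]
  || [&& p != q, q != r, p != r & [|| p == a, q == a | r == a]]
  || [|| [&& p == q, p != a, r != a & r != p],
         [&& p == r, p != a, q != a & q != p]
       | [&& q == r, q != a, p != a & p != q]].

Definition has_K31 : Prop :=
  exists x y z w : T,
    [/\ uniq [:: x; y; z; w],
        col x y = col y z, col x y = col x z &
        K31_pattern (col x y) (col w x) (col w y) (col w z)].

Definition has_K33 : Prop :=
  exists (x1 x2 x3 y1 y2 y3 : T) (a b d : 'I_c),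
    [/\ uniq [:: x1; x2; x3; y1; y2; y3], uniq [:: a; b; d],
        [/\ col x1 x2 = a, col x1 x3 = a & col x2 x3 = a],
        [/\ col y1 y2 = b, col y1 y3 = b & col y2 y3 = b] &
        (forall x y, x \in [:: x1; x2; x3] -> y \in [:: y1; y2; y3] -> col x y = d)].

Definition standard : Prop := ~ has_K31 /\ ~ has_K33.

Definition mono (X : {set T}) (i : 'I_c) : Prop :=
  forall x y, x \in X -> y \in X -> x != y -> col x y = i.

Definition bigsize : nat := maxn c.+1 6.

Definition inXF (X : {set T}) : Prop :=
  [/\ bigsize <= #|X|, exists i, mono X i &
      forall Y : {set T}, X \subset Y -> bigsize <= #|Y| -> (exists i, mono Y i) -> Y = X].

Definition inYF (S : {set T}) : Prop :=
  exists y, S = [set y] /\ forall X, inXF X -> y \notin X.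

(* vertices of E_F: elements of \mathcal X_F \sqcup Y_F (these are disjoint as
   families of subsets of T, since elements of \mathcal X_F have size >= 6) *)
Definition inVE (S : {set T}) : Prop := inXF S \/ inYF S.

Definition cross_edges (v1 v2 : {set T}) : {set {set T}} :=
  [set [set a; b] | a in v1, b in v2 & a != b].

Definition majority (v1 v2 : {set T}) (i : 'I_c) : Prop :=
  #|cross_edges v1 v2| < 2 * #|[set e in cross_edges v1 v2 | F e == i]|.

(* E_F({v1,v2}) is defined and equals i *)
Definition EFcol (v1 v2 : {set T}) (i : 'I_c) : Prop :=
  [/\ inVE v1, inVE v2 &
     [\/ v1 = v2 /\ inXF v1 /\ mono v1 i,
         [/\ v1 <> v2, inYF v1, inYF v2 & F (v1 :|: v2) = i]
       | [/\ v1 <> v2, ~ (inYF v1 /\ inYF v2) & majority v1 v2 i]]].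

Definition embeds (i : 'I_c) (t : nat) (phi : 'I_t -> {set T}) : Prop :=
  forall u w : 'I_t, u != w -> EFcol (phi u) (phi w) i.

End Coloring.

(* Main.v *)
Require Import Defs.
From mathcomp Require Import all_boot zify.
From Stdlib Require Import Classical_Prop.
Set Implicit Arguments. Unset Strict Implicit. Unset Printing Implicit Defensive.

Lemma colC (T : finType) c (F : {set T} -> 'I_c) x y : col F x y = col F y x.
Proof. by rewrite /col setUC. Qed.

Lemma pick_avoid (T : finType) (X : {set T}) (L : seq T) :
  size L < #|X| -> exists x, x \in X /\ x \notin L.
Proof.
move=> hL; case: (boolP (X :\: [set x | x \in L] == set0)) => H; last first.
  by case/set0Pn: H => x; rewrite !inE => /andP[xL xX]; exists x.
move: H; rewrite setD_eq0 => /subset_leq_card; rewrite cardsE => h.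
by have := leq_trans h (card_size L); rewrite leqNgt hL.
Qed.

Lemma pat1 c (a p q r : 'I_c) : p = a -> q = a -> r != a -> K31_pattern a p q r.
Proof. by move=> -> -> h; rewrite /K31_pattern !eqxx h. Qed.

Lemma pat3 c (a p q r : 'I_c) : p = q -> p != a -> r != a -> r != p -> K31_pattern a p q r.
Proof.
move=> <- h1 h2 h3; rewrite /K31_pattern eqxx h1 h2 h3 /=.
by rewrite !orbT.
Qed.

Lemma set2_inj (T : finType) (a b a' b' : T) :
  [set a; b] = [set a'; b'] -> (a = a' /\ b = b') \/ (a = b' /\ b = a').
Proof.
move=> E.
have ha : a \in [set a'; b'] by rewrite -E !inE eqxx.
have hb : b \in [set a'; b'] by rewrite -E !inE eqxx orbT.
have ha' : a' \in [set a; b] by rewrite E !inE eqxx.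
have hb' : b' \in [set a; b] by rewrite E !inE eqxx orbT.
move: ha hb ha' hb'; rewrite !inE.
by do 4 (case/orP=> /eqP ?); subst; by [left|right].
Qed.

Lemma in_cross (T : finType) (v1 v2 : {set T}) e :
  e \in cross_edges v1 v2 -> exists a b, [/\ a \in v1, b \in v2, a != b & e = [set a; b]].
Proof.
by case/imset2P=> a b av1; rewrite inE => /andP[bv2 ab] ->; exists a, b.
Qed.

Lemma mem_cross (T : finType) (v1 v2 : {set T}) a b :
  a \in v1 -> b \in v2 -> a != b -> [set a; b] \in cross_edges v1 v2.
Proof. by move=> h1 h2 h3; apply/imset2P; exists a b => //; rewrite inE h2. Qed.

Lemma neq_in (T : finType) (X : {set T}) x y : x \in X -> y \notin X -> (x != y) && (y != x).
Proof. by move=> hx hy; apply/andP; split; apply/eqP => E; move: hy; [rewrite -E hx | rewrite E hx]. Qed.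

Ltac uniqt := rewrite /= !in_cons !in_nil !orbF !negb_or;
  repeat (apply/andP; split); rewrite ?(eq_sym _) //.

Lemma K31_in (T : finType) c (F : {set T} -> 'I_c) (std : standard F) X j x1 x2 x3 w :
  mono F X j -> x1 \in X -> x2 \in X -> x3 \in X -> w \notin X ->
  x1 != x2 -> x1 != x3 -> x2 != x3 ->
  K31_pattern j (col F w x1) (col F w x2) (col F w x3) -> False.
Proof.
move=> hm h1 h2 h3 hw n12 n13 n23 hp; case: std => hK _; apply: hK.
exists x1, x2, x3, w; split.
- case/andP: (neq_in h1 hw) => a1 _; case/andP: (neq_in h2 hw) => a2 _.
  case/andP: (neq_in h3 hw) => a3 _.
  by rewrite /= !in_cons !in_nil !orbF !negb_or n12 n13 n23 a1 a2 a3.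
- by rewrite (hm _ _ h1 h2 n12) (hm _ _ h2 h3 n23).
- by rewrite (hm _ _ h1 h2 n12) (hm _ _ h1 h3 n13).
- by rewrite (hm _ _ h1 h2 n12).
Qed.

Lemma bigsize6 c : 6 <= bigsize c. Proof. exact: leq_maxr. Qed.
Lemma bigsizec c : c < bigsize c. Proof. exact: leq_maxl. Qed.

Lemma structure (T : finType) c (F : {set T} -> 'I_c) (std : standard F) X j y :
  inXF F X -> mono F X j -> y \notin X ->
  exists b e, [/\ b != j, (forall x, x \in X -> x != e -> col F y x = b)
                & (forall x, x \in X -> col F y x = b \/ col F y x = j)].
Proof.
move=> [hsz _ hmax] hm hy.
have [x1 [x2 [h1 h2 n12 E12]]] : exists x1 x2, [/\ x1 \in X, x2 \in X, x1 != x2 & col F y x1 = col F y x2].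
  case: (boolP [exists x1 in X, exists x2 in X, (x1 != x2) && (col F y x1 == col F y x2)]).
    by case/existsP=> x1 /andP[h1 /existsP[x2 /andP[h2 /andP[n /eqP E]]]]; exists x1, x2.
  move=> H; exfalso.
  have inj : {in X &, injective (col F y)}.
    move=> a b ha hb E; apply/eqP; apply: contraNT H => n.
    by apply/existsP; exists a; rewrite ha; apply/existsP; exists b; rewrite hb n E eqxx.
  have := card_in_imset inj; move: (max_card (col F y @: X)); rewrite card_ord => le E.
  by move: (leq_trans (bigsizec c) hsz); rewrite -E ltnNge le.
set b := col F y x1.
case: (boolP (b == j)) => [/eqP bj|bnj].
  exfalso.
  have allj : forall x, x \in X -> col F y x = j.
    move=> x hx; apply/eqP; apply/negPn/negP => nj.
    have n1 : x1 != x by apply: contraNneq nj => <-; rewrite -/b bj.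
    have n2 : x2 != x by apply: contraNneq nj => <-; rewrite -E12 -/b bj.
    by apply: (K31_in std hm h1 h2 hx hy n12 n1 n2); apply: pat1 => //; rewrite -?E12 -/b bj.
  have mY : mono F (y |: X) j.
    move=> a a' ; rewrite !inE => /orP[/eqP->|ha] /orP[/eqP->|ha'] n //.
    - by rewrite eqxx in n.
    - exact: allj.
    - by rewrite colC; apply: allj.
    - exact: hm.
  have := hmax (y |: X) (subsetUr _ _) _ (ex_intro _ j mY).
  have -> : bigsize c <= #|y |: X| by apply: leq_trans hsz _; apply: subset_leq_card; apply: subsetUr.
  move=> /(_ isT) EX; move: hy; rewrite -EX; by rewrite !inE eqxx.
have inbj : forall x, x \in X -> col F y x = b \/ col F y x = j.
  move=> x hx; case: (boolP (col F y x == b)) => [/eqP->|nb]; first by left.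
  case: (boolP (col F y x == j)) => [/eqP->|nj]; first by right.
  exfalso.
  have n1 : x1 != x by apply: contraNneq nb => <-.
  have n2 : x2 != x by apply: contraNneq nb => <-; rewrite -E12.
  by apply: (K31_in std hm h1 h2 hx hy n12 n1 n2); apply: pat3 => //; rewrite -E12.
exists b; case: (pickP [pred x in X | col F y x == j]) => [e /andP[he /eqP ej]|none].
  exists e; split => // x hx nxe; case: (inbj x hx) => // xj; exfalso.
  have nx1 : x != x1 by apply: contraNneq bnj => E; rewrite -xj E.
  have ne1 : e != x1 by apply: contraNneq bnj => E; rewrite -ej E.
  apply: (K31_in std hm hx he h1 hy nxe nx1 ne1); apply: pat1 => //.
exists y; split => // x hx _; case: (inbj x hx) => // xj.
by move: (none x); rewrite /= hx xj eqxx.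
Qed.

Definition good (T : finType) c (F : {set T} -> 'I_c) (X : {set T}) (i : 'I_c) (y : T) :=
  exists e, forall x, x \in X -> x != e -> col F y x = i.

Lemma lemG (T : finType) c (F : {set T} -> 'I_c) (std : standard F) X j i y x0 :
  inXF F X -> mono F X j -> y \notin X -> x0 \in X -> col F y x0 = i -> i != j ->
  good F X i y.
Proof.
move=> hX hm hy h0 c0 ij.
have [b [e [bj he hbj]]] := structure std hX hm hy.
have bi : b = i by case: (hbj x0 h0); rewrite c0 // => E; rewrite E eqxx in ij.
by exists e => x hx hxe; rewrite -bi; apply: he.
Qed.

Lemma XF_notYF (T : finType) c (F : {set T} -> 'I_c) X : inXF F X -> ~ inYF F X.
Proof. by move=> hX [y [E hy]]; move: (hy X hX); rewrite E set11. Qed.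

Lemma XF_nonsub (T : finType) c (F : {set T} -> 'I_c) X X' :
  inXF F X -> inXF F X' -> X' <> X -> exists2 q, q \in X' & q \notin X.
Proof.
move=> [hs [j hm] _] [_ _ hmax'] ne.
case: (boolP (X' \subset X)) => [sub|]; last by case/subsetPn => q; exists q.
by case: ne; symmetry; apply: hmax' => //; exists j.
Qed.

Lemma lemI (T : finType) c (F : {set T} -> 'I_c) (std : standard F) X X' s1 s2 :
  inXF F X -> inXF F X' -> X' <> X -> s1 \in X -> s1 \in X' -> s2 \in X -> s2 \in X' -> s1 = s2.
Proof.
move=> hX hX' ne a1 b1 a2 b2; apply/eqP; apply/negPn/negP => n12.
have [q hq' hq] := XF_nonsub hX hX' ne.
have [j hm] : exists j, mono F X j by case: hX.
have [j' hm'] : exists j, mono F X' j by case: hX'.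
have jj : j' = j by rewrite -(hm _ _ a1 a2 n12) (hm' _ _ b1 b2 n12).
have [b [e [bj he hbj]]] := structure std hX hm hq.
have c1 : col F q s1 = j.
  by rewrite -jj; apply: hm' => //; case/andP: (neq_in a1 hq) => _ ->.
have c2 : col F q s2 = j.
  by rewrite -jj; apply: hm' => //; case/andP: (neq_in a2 hq) => _ ->.
case: (boolP (s1 == e)) => [/eqP E1|n1]; last by move: bj; rewrite -(he _ a1 n1) c1 eqxx.
have n2 : s2 != e by rewrite -E1 eq_sym.
by move: bj; rewrite -(he _ a2 n2) c2 eqxx.
Qed.

Lemma VE_XF_inter (T : finType) c (F : {set T} -> 'I_c) (std : standard F) X v s1 s2 :
  inXF F X -> inVE F v -> v <> X -> s1 \in X -> s1 \in v -> s2 \in X -> s2 \in v -> s1 = s2.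
Proof.
move=> hX [hv|[y [E hy]]] ne a1 b1 a2 b2; first exact: (lemI std hX hv ne).
by move: b1; rewrite E inE => /eqP E1; move: (hy X hX); rewrite -E1 a1.
Qed.

Lemma inter_rep (T : finType) c (F : {set T} -> 'I_c) (std : standard F) X v :
  inXF F X -> inVE F v -> v <> X -> exists s0, forall p, p \in X -> p \in v -> p = s0.
Proof.
move=> hX hv ne.
case: (pickP [pred p in X | p \in v]) => [s /andP[sX sv]|none].
  by exists s => p pX pv; apply: (VE_XF_inter std hX hv ne).
have [x _] : exists x, x \in X /\ x \notin [::].
  apply: pick_avoid; case: hX => hs _ _; by apply: (leq_trans _ (leq_trans (bigsize6 c) hs)).
by exists x => p pX pv; move: (none p); rewrite /= pX pv.
Qed.

Lemma lemM (T : finType) c (F : {set T} -> 'I_c) (std : standard F) X j i v :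
  inXF F X -> mono F X j -> i != j -> majority F X v i ->
  exists y, [/\ y \in v, y \notin X & good F X i y].
Proof.
move=> hX hm ij hmaj.
have : [set e in cross_edges X v | F e == i] != set0.
  rewrite -card_gt0; move: hmaj; rewrite /majority.
  by case: (#|[set e in cross_edges X v | F e == i]|); rewrite ?muln0.
case/set0Pn=> e; rewrite inE => /andP[/in_cross [a [b [ha hb nab ->]]] /eqP Fi].
case: (boolP (b \in X)) => bX.
  by move: ij; rewrite -Fi -/(col F a b) (hm _ _ ha bX nab) eqxx.
exists b; split => //; apply: (lemG std hX hm bX ha _ ij).
by rewrite colC.
Qed.

Lemma lemT (T : finType) c (F : {set T} -> 'I_c) (std : standard F) X j i y z :
  inXF F X -> mono F X j -> i != j -> y \notin X -> z \notin X -> y != z ->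
  col F y z = i -> good F X i y -> good F X i z -> False.
Proof.
move=> hX hm ij hy hz nyz cyz [ey hey] [ez hez].
have hs : 6 <= #|X| by case: hX => hs _ _; exact: leq_trans (bigsize6 c) hs.
have [x [hx]] : exists x, x \in X /\ x \notin [:: ey; ez] by apply: pick_avoid; apply: leq_trans _ hs.
rewrite !in_cons in_nil orbF negb_or => /andP[xey xez].
have [x' [hx']] : exists w, w \in X /\ w \notin [:: ey; ez; x] by apply: pick_avoid; apply: leq_trans _ hs.
rewrite !in_cons in_nil orbF !negb_or => /andP[x'ey /andP[x'ez x'x]].
case: std => hK _; apply: hK; exists y, z, x, x'; split.
- case/andP: (neq_in hx hy) => a1 a2; case/andP: (neq_in hx hz) => a3 a4.
  case/andP: (neq_in hx' hy) => a5 a6; case/andP: (neq_in hx' hz) => a7 a8.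
  rewrite /= !in_cons !in_nil !orbF !negb_or nyz a2 a4 a6 a8 /=.
  by rewrite andbT eq_sym.
- by rewrite cyz hez.
- by rewrite cyz hey.
- rewrite cyz; apply: pat1.
  + by rewrite colC hey.
  + by rewrite colC hez.
  + by rewrite (hm _ _ hx' hx x'x) eq_sym.
Qed.

Lemma XF6 (T : finType) c (F : {set T} -> 'I_c) X : inXF F X -> 6 <= #|X|.
Proof. by case=> hs _ _; exact: leq_trans (bigsize6 c) hs. Qed.

Lemma Kstar (T : finType) c (F : {set T} -> 'I_c) (std : standard F) X X' j j' i :
  inXF F X -> mono F X j -> i != j -> inXF F X' -> mono F X' j' -> i != j' ->
  X' <> X -> majority F X X' i ->
  exists e', forall q, q \in X' -> q \notin X -> q != e' -> good F X i q.
Proof.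
move=> hX hm ij hX' hm' ij' ne hmaj.
have [q0 [hq0 hq0X [e0 he0]]] := lemM std hX hm ij hmaj.
have [s0 hs0] := inter_rep std hX (or_introl hX') ne.
have [p [hp]] : exists w, w \in X /\ w \notin [:: e0; s0].
  by apply: pick_avoid; apply: leq_trans _ (XF6 hX).
rewrite !in_cons in_nil orbF negb_or => /andP[pe0 ps0].
have pX' : p \notin X' by apply/negP => h; move: ps0; rewrite (hs0 p hp h) eqxx.
have cp : col F p q0 = i by rewrite colC; apply: he0.
have [e' he'] := lemG std hX' hm' pX' hq0 cp ij'.
exists e' => q hq hqX hqe; apply: (lemG std hX hm hqX hp _ ij).
by rewrite colC; apply: he'.
Qed.

Lemma lemA (T : finType) c (F : {set T} -> 'I_c) (std : standard F) X i v :
  inXF F X -> mono F X i -> inVE F v -> v <> X -> majority F X v i -> False.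
Proof.
move=> hX hm hv ne hmaj.
set D := v :\: X.
set I := [set e in cross_edges X v | F e == i].
have hex : forall y, y \in D -> exists e, forall x, x \in X -> x != e -> col F y x != i.
  move=> y; rewrite inE => /andP[yX _].
  have [b [e [bi he _]]] := structure std hX hm yX.
  by exists e => x hx hxe; rewrite he.
pose g y := odflt y [pick x in X | col F y x == i].
have hg : forall y a, y \in D -> a \in X -> col F y a = i -> a = g y.
  move=> y a hy ha ca; have [e he] := hex y hy.
  have ae : a = e by apply/eqP; apply/negPn/negP => n; move: (he a ha n); rewrite ca eqxx.
  rewrite /g; case: pickP => [a' /andP[ha' /eqP ca']|none] /=.
    have a'e : a' = e by apply/eqP; apply/negPn/negP => n; move: (he a' ha' n); rewrite ca' eqxx.
    by rewrite ae a'e.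
  by move: (none a); rewrite /= ha ca eqxx.
have [s0 hs0] := inter_rep std hX hv ne.
set A1 := [set [set g y; y] | y in D].
set A2 := [set [set a; s0] | a in X].
have key : forall e, e \in I -> e \in A1 \/ (exists b, [/\ b \in X, b \in v & e \in A2]).
  move=> e; rewrite inE => /andP[/in_cross[a[b[ha hb nab ->]]] /eqP Fi].
  case: (boolP (b \in X)) => bX.
    right; exists b; split => //; rewrite (hs0 b bX hb).
    by apply/imsetP; exists a.
  have bD : b \in D by rewrite inE bX hb.
  left; apply/imsetP; exists b => //; rewrite -(hg b a bD ha) //.
  by rewrite colC.
have inj : {in setX X D &, injective (fun p : T * T => [set p.1; p.2])}.
  move=> [a b] [a' b'] /setXP[ha hb] /setXP[ha' hb'] /= E.
  case: (set2_inj E) => [[-> ->]|[E1 E2]] //.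
  by move: hb'; rewrite inE -E1 ha.
have cardC : #|X| * #|D| <= #|cross_edges X v|.
  rewrite -cardsX -(card_in_imset inj); apply: subset_leq_card; apply/subsetP => e.
  case/imsetP=> [[a b]] /setXP[ha hb] -> /=.
  move: hb; rewrite inE => /andP[bX bv]; apply: mem_cross => //.
  by case/andP: (neq_in ha bX).
have maj : #|cross_edges X v| < 2 * #|I| := hmaj.
have nX := XF6 hX.
have cA1 : #|A1| <= #|D| := leq_imset_card _ _.
have cA2 : #|A2| <= #|X| := leq_imset_card _ _.
case: (boolP [exists s, (s \in X) && (s \in v)]).
  case/existsP => s /andP[sX sv].
  have hvXF : inXF F v.
    case: hv => // [[y [E hy]]]; move: sv; rewrite E inE => /eqP E'.
    by move: (hy X hX); rewrite -E' sX.
  have nv := XF6 hvXF.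
  have cI : #|v :&: X| <= 1.
    rewrite -(cards1 s0); apply: subset_leq_card; apply/subsetP => p.
    by rewrite !inE => /andP[pv pX]; rewrite (hs0 p pX pv).
  have cvd := cardsID X v.
  have cI2 : #|I| <= #|A1 :|: A2|.
    apply: subset_leq_card; apply/subsetP => e he; rewrite inE.
    by case: (key e he) => [->|[b [_ _ ->]]]; rewrite ?orbT.
  have cU := cardsUI A1 A2.
  rewrite -/D in cvd.
  nia.
move=> H.
have cI2 : #|I| <= #|A1|.
  apply: subset_leq_card; apply/subsetP => e he.
  case: (key e he) => // [[b [bX bv _]]].
  by move: H; case/existsP; exists b; rewrite bX bv.
nia.
Qed.

Lemma XF_col (T : finType) c (F : {set T} -> 'I_c) X : inXF F X -> exists j, mono F X j.
Proof. by case. Qed.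

Lemma EFcol_XF (T : finType) c (F : {set T} -> 'I_c) v1 v2 i :
  inXF F v1 -> v1 <> v2 -> EFcol F v1 v2 i -> majority F v1 v2 i.
Proof.
move=> h1 ne [_ _ [[E _]|[_ y1 _ _]|[_ _ m]]] //.
by case: (XF_notYF h1 y1).
Qed.

Lemma EFcol_VE (T : finType) c (F : {set T} -> 'I_c) v1 v2 i :
  EFcol F v1 v2 i -> inVE F v1 /\ inVE F v2.
Proof. by case. Qed.

Lemma EFcol_YF (T : finType) c (F : {set T} -> 'I_c) v1 v2 i :
  inYF F v1 -> inYF F v2 -> v1 <> v2 -> EFcol F v1 v2 i -> F (v1 :|: v2) = i.
Proof. by move=> h1 h2 ne [_ _ [[E _]|[_ _ _ ->]|[_ n _]]] //; case: n. Qed.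

Lemma case2 (T : finType) c (F : {set T} -> 'I_c) (std : standard F) X X' w j j' i :
  inXF F X -> mono F X j -> i != j -> inXF F X' -> mono F X' j' -> i != j' ->
  X' <> X -> inYF F w -> majority F X X' i -> majority F X w i -> majority F X' w i -> False.
Proof.
move=> hX hm ij hX' hm' ij' ne [y [-> _]] m1 m2 m3.
have [y1 [hy1 y1X gy]] := lemM std hX hm ij m2.
have [y2 [hy2 y2X' [ey' hey']]] := lemM std hX' hm' ij' m3.
move: hy1 hy2; rewrite !inE => /eqP ? /eqP ?; subst y1 y2.
have [e3 he3] := Kstar std hX hm ij hX' hm' ij' ne m1.
have [s hs] := inter_rep std hX (or_introl hX') ne.
have [q [hq]] : exists w, w \in X' /\ w \notin [:: e3; s; ey'].
  by apply: pick_avoid; apply: leq_trans _ (XF6 hX').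
rewrite !in_cons in_nil orbF !negb_or => /andP[qe3 /andP[qs qey]].
have qX : q \notin X by apply/negP => h; move: qs; rewrite (hs q h hq) eqxx.
apply: (lemT std hX hm ij y1X qX _ (hey' q hq qey) gy (he3 q hq qX qe3)).
by case/andP: (neq_in hq y2X').
Qed.

Lemma case3 (T : finType) c (F : {set T} -> 'I_c) (std : standard F) X X' X'' j j' j'' i :
  inXF F X -> mono F X j -> i != j -> inXF F X' -> mono F X' j' -> i != j' ->
  inXF F X'' -> mono F X'' j'' -> i != j'' ->
  X' <> X -> X'' <> X -> X'' <> X' ->
  majority F X X' i -> majority F X X'' i -> majority F X' X'' i -> False.
Proof.
move=> hX hm ij hX' hm' ij' hX'' hm'' ij'' n1 n2 n3 m1 m2 m3.
have [e1 he1] := Kstar std hX hm ij hX'' hm'' ij'' n2 m2.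
have [e2 he2] := Kstar std hX' hm' ij' hX'' hm'' ij'' n3 m3.
have [s1 hs1] := inter_rep std hX (or_introl hX'') n2.
have [s2 hs2] := inter_rep std hX' (or_introl hX'') n3.
have [r [hr]] : exists w, w \in X'' /\ w \notin [:: e1; e2; s1; s2].
  by apply: pick_avoid; apply: leq_trans _ (XF6 hX'').
rewrite !in_cons in_nil orbF !negb_or => /andP[re1 /andP[re2 /andP[rs1 rs2]]].
have rX : r \notin X by apply/negP => h; move: rs1; rewrite (hs1 r h hr) eqxx.
have rX' : r \notin X' by apply/negP => h; move: rs2; rewrite (hs2 r h hr) eqxx.
have [er' her'] := he2 r hr rX' re2.
have [e3 he3] := Kstar std hX hm ij hX' hm' ij' n1 m1.
have [s3 hs3] := inter_rep std hX (or_introl hX') n1.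
have [q [hq]] : exists w, w \in X' /\ w \notin [:: e3; s3; er'].
  by apply: pick_avoid; apply: leq_trans _ (XF6 hX').
rewrite !in_cons in_nil orbF !negb_or => /andP[qe3 /andP[qs qer]].
have qX : q \notin X by apply/negP => h; move: qs; rewrite (hs3 q h hq) eqxx.
apply: (lemT std hX hm ij rX qX _ (her' q hq qer) (he1 r hr rX re1) (he3 q hq qX qe3)).
by case/andP: (neq_in hq rX').
Qed.

Lemma lemB (T : finType) c (F : {set T} -> 'I_c) (std : standard F) X v w i :
  inXF F X -> v <> X -> w <> X -> v <> w ->
  EFcol F X v i -> EFcol F X w i -> EFcol F v w i -> EFcol F w v i -> False.
Proof.
move=> hX nv nw nvw eXv eXw evw ewv.
have [j hm] := XF_col hX.
have mXv : majority F X v i by apply: EFcol_XF => // E; apply: nv.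
have mXw : majority F X w i by apply: EFcol_XF => // E; apply: nw.
have [_ hv] := EFcol_VE eXv; have [_ hw] := EFcol_VE eXw.
case: (boolP (i == j)) => [/eqP ij|ij].
  by subst j; apply: (lemA std hX hm hv nv mXv).
case: hv => [hv|hv]; case: hw => [hw|hw].
- have [j' hm'] := XF_col hv; have [j'' hm''] := XF_col hw.
  have mvw : majority F v w i by apply: EFcol_XF.
  case: (boolP (i == j')) => [/eqP ij'|ij'].
    by subst j'; apply: (lemA std hv hm' (or_introl hw) (fun E => nvw (esym E)) mvw).
  case: (boolP (i == j'')) => [/eqP ij''|ij''].
    subst j''; apply: (lemA std hw hm'' (or_introl hv) nvw).
    by apply: EFcol_XF => // E; apply: nvw.
  exact: (case3 std hX hm ij hv hm' ij' hw hm'' ij'' nv nw (fun E => nvw (esym E)) mXv mXw mvw).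
- have [j' hm'] := XF_col hv.
  have mvw : majority F v w i by apply: EFcol_XF.
  case: (boolP (i == j')) => [/eqP ij'|ij'].
    by subst j'; apply: (lemA std hv hm' (or_intror hw) (fun E => nvw (esym E)) mvw).
  exact: (case2 std hX hm ij hv hm' ij' nv hw mXv mXw mvw).
- have [j' hm'] := XF_col hw.
  have mwv : majority F w v i by apply: EFcol_XF => // E; apply: nvw.
  case: (boolP (i == j')) => [/eqP ij'|ij'].
    by subst j'; apply: (lemA std hw hm' (or_intror hv) nvw mwv).
  exact: (case2 std hX hm ij hw hm' ij' nw hv mXw mXv mwv).
- have F2 := EFcol_YF hv hw nvw evw.
  case: hv => y [Ey hy]; case: hw => z [Ez hz].
  have [y1 [hy1 y1X gy]] := lemM std hX hm ij mXv.
  have [z1 [hz1 z1X gz]] := lemM std hX hm ij mXw.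
  move: hy1 hz1; rewrite Ey Ez !inE => /eqP e1 /eqP e2.
  rewrite e1 in y1X gy; rewrite e2 in z1X gz.
  apply: (lemT std hX hm ij y1X z1X _ _ gy gz).
    by apply/eqP => E; apply: nvw; rewrite Ey Ez E.
  by rewrite -F2 Ey Ez.
Qed.

Lemma no_repeat (T : finType) c (F : {set T} -> 'I_c) (std : standard F) i t
  (phi : 'I_t -> {set T}) u w :
  embeds F i phi -> phi u <> phi w -> forall u1 w1, u1 != w1 -> phi u1 <> phi w1.
Proof.
move=> emb nuw u1 w1 n E.
have [hX hm] : inXF F (phi u1) /\ mono F (phi u1) i.
  case: (emb u1 w1 n) => _ _; rewrite -E => -[[_ [H1 H2]]|[H _ _ _]|[H _ _]] //.
have [k [nk]] : exists k, phi k <> phi u1 /\ k != u1.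
  case: (phi u =P phi u1) => eu.
    exists w; split; first by rewrite -eu => h; apply: nuw; rewrite h.
    by apply/eqP => ewu; apply: nuw; rewrite ewu -eu.
  by exists u; split => //; apply/eqP => h; apply: eu; rewrite h.
move=> kn.
have kn' : u1 != k by rewrite eq_sym.
have e := emb u1 k kn'.
have [_ hv] := EFcol_VE e.
apply: (lemA std hX hm hv nk).
by apply: EFcol_XF => // h; apply: nk; rewrite h.
Qed.

Lemma main3 (T : finType) c (F : {set T} -> 'I_c) (std : standard F) i t
  (phi : 'I_t -> {set T}) u0 :
  2 < t -> embeds F i phi -> inXF F (phi u0) ->
  (forall u1 w1, u1 != w1 -> phi u1 <> phi w1) -> False.
Proof.
move=> ht emb hX inj.
have [w1 [_]] : exists w, w \in [set: 'I_t] /\ w \notin [:: u0].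
  by apply: pick_avoid; rewrite cardsT card_ord; apply: leq_trans _ ht.
rewrite !in_cons in_nil orbF => n1.
have [w2 [_]] : exists w, w \in [set: 'I_t] /\ w \notin [:: u0; w1].
  by apply: pick_avoid; rewrite cardsT card_ord.
rewrite !in_cons in_nil orbF negb_or => /andP[n2 n12].
apply: (lemB std hX (inj _ _ n1) (inj _ _ n2) (inj w1 w2 _) (emb _ _ _) (emb _ _ _) (emb _ _ _) (emb _ _ _)).
all: by rewrite // eq_sym.
Qed.

Lemma monoP (T : finType) c (F : {set T} -> 'I_c) Y k :
  reflect (mono F Y k) [forall x in Y, forall y in Y, (x != y) ==> (col F x y == k)].
Proof.
apply: (iffP idP).
  move=> /forall_inP H x y hx hy n; move/forall_inP: (H x hx) => H2.
  by move: (H2 y hy); rewrite n => /eqP.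
move=> H; apply/forall_inP => x hx; apply/forall_inP => y hy; apply/implyP => n.
by rewrite (H x y hx hy n).
Qed.

Lemma ext_max (T : finType) c (F : {set T} -> 'I_c) (S : {set T}) i :
  mono F S i -> bigsize c <= #|S| -> exists X, inXF F X /\ S \subset X.
Proof.
move=> hm hs.
pose P := fun Y : {set T} => (S \subset Y) &&
  [exists k, [forall x in Y, forall y in Y, (x != y) ==> (col F x y == k)]].
have PS : P S by rewrite /P subxx /=; apply/existsP; exists i; apply/monoP.
case: (arg_maxnP (fun Y : {set T} => #|Y|) PS) => X /andP[sX /existsP[k /monoP mk]] mx.
exists X; split => //; split.
- by apply: leq_trans hs (subset_leq_card sX).
- by exists k.
- move=> Y sXY hY [k' mk'].
  have := mx Y; rewrite /P (subset_trans sX sXY) /=.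
  have -> : [exists k, [forall x in Y, forall y in Y, (x != y) ==> (col F x y == k)]].
    by apply/existsP; exists k'; apply/monoP.
  move=> /(_ isT) le.
  by apply/eqP; rewrite eq_sym eqEcard sXY le.
Qed.

Theorem claim5p5 (T : finType) (c : nat) (F : {set T} -> 'I_c) :
  2 <= c -> standard F ->
  forall i : 'I_c,
    (forall phi : 'I_(maxn c.+1 6) -> {set T},
        embeds F i phi -> forall u w, phi u = phi w)
    /\
    (forall phi : 'I_3 -> {set T},
        embeds F i phi -> (exists u, inXF F (phi u)) -> forall u w, phi u = phi w).
Proof.
move=> c2 std i; split; last first.
  move=> phi emb [u0 hu0] u w; case: (phi u =P phi w) => // nuw; exfalso.
  exact: (main3 std _ emb hu0 (no_repeat std emb nuw)).
move=> phi emb u w; case: (phi u =P phi w) => // nuw; exfalso.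
have inj := no_repeat std emb nuw.
have ht : 2 < maxn c.+1 6 by apply: leq_trans _ (leq_maxr _ _).
case: (classic (exists u0, inXF F (phi u0))) => [[u0 hu0]|hno].
  exact: (main3 std ht emb hu0 inj).
have hY : forall u, exists y, phi u = [set y] /\ (forall X, inXF F X -> y \notin X).
  move=> u1.
  have [w1 [_ n]] : exists w, w \in [set: 'I_(maxn c.+1 6)] /\ w \notin [:: u1].
    by apply: pick_avoid; rewrite cardsT card_ord; apply: leq_trans _ ht.
  have n' : u1 != w1 by move: n; rewrite !in_cons in_nil orbF eq_sym.
  have [hv _] := EFcol_VE (emb u1 w1 n').
  case: hv => [h|[y hy]]; last by exists y.
  by exfalso; apply: hno; exists u1.
have [f hf] := fin_all_exists hY.
have YFu : forall a, inYF F (phi a) by move=> a; exists (f a).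
set S := [set f u | u in [set: 'I_(maxn c.+1 6)]].
have finj : injective f.
  move=> a b E; apply/eqP; apply/negPn/negP => n; apply: (inj a b n).
  by rewrite (hf a).1 (hf b).1 E.
have cS : #|S| = maxn c.+1 6 by rewrite card_imset // cardsT card_ord.
have mS : mono F S i.
  move=> x y /imsetP[a _ ->] /imsetP[b _ ->] n.
  have ab : a != b by apply: contraNneq n => ->.
  have := EFcol_YF (YFu a) (YFu b) (inj a b ab) (emb a b ab).
  by rewrite (hf a).1 (hf b).1.
have [X [hX sX]] : exists X, inXF F X /\ S \subset X.
  by apply: (ext_max mS); rewrite cS.
have fS : f u \in S by apply/imsetP; exists u.
by move: ((hf u).2 X hX); rewrite (subsetP sX _ fS).
Qed.
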